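(* Let $G$ be a finite abelian group and let $x, y \in G$. Then there exists an automorphism $\phi \in \operatorname{Aut}(G)$ with $\phi(x) = y$ if and only if $G/\langle x \rangle \cong G/\langle y \rangle$.
   Context: $G$ is written additively; $\langle x\rangle$ denotes the cyclic subgroup generated by $x$, and $\operatorname{Aut}(G)$ is the group of group automorphisms of $G$. *)

(* Defs.v *)
From mathcomp Require Import all_boot all_fingroup all_solvable.
Set Implicit Arguments.
Unset Strict Implicit.
Unset Printing Implicit Defensive.

(* Main.v *)
Require Import Defs.
From mathcomp Require Import all_boot all_fingroup all_solvable.
From mathcomp Require Import zify.
Local Open Scope group_scope.

Module Aux.
Set Implicit Arguments. Unset Strict Implicit. Unset Printing Implicit Defensive.



Section PW.
Variable gT : finGroupType.
Implicit Types G H : {group gT}.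

Definition pw m (A : {set gT}) := [set a ^+ m | a in A].

Lemma pw_group_set G m : abelian G -> group_set (pw m G).
Proof.
move=> cGG; apply/group_setP; split.
  by apply/imsetP; exists 1; rewrite ?expg1n.
move=> _ _ /imsetP[a Ga ->] /imsetP[b Gb ->].
by apply/imsetP; exists (a * b); rewrite ?groupM // expgMn //; apply: (centsP cGG).
Qed.

Lemma pw_sub G m : pw m G \subset G.
Proof. by apply/subsetP=> _ /imsetP[a Ga ->]; rewrite groupX. Qed.

Lemma mem_pw G m a : a \in G -> a ^+ m \in pw m G.
Proof. by move=> Ga; apply/imsetP; exists a. Qed.

End PW.

Lemma card_pw_isog (aT rT : finGroupType) (G : {group aT}) (H : {group rT}) m :
  G \isog H -> #|pw m G| = #|pw m H|.
Proof.
case/isogP=> f injf <-.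
have sG : pw m G \subset G by apply: pw_sub.
rewrite -(card_injm injf sG) morphimEsub // morphimEsub //.
rewrite /pw -!imset_comp; congr #|pred_of_set _|; apply: eq_in_imset=> a Ga /=.
by rewrite morphX.
Qed.
Lemma pw_quotient (gT : finGroupType) (G H : {group gT}) m :
  G \subset 'N(H) -> pw m (G / H) = pw m G / H.
Proof.
move=> nHG; have sG := subset_trans (pw_sub G m) nHG.
rewrite /quotient !morphimEsub // /pw -!imset_comp; apply: eq_in_imset=> a Ga /=.
by rewrite morphX // (subsetP nHG).
Qed.

Lemma quot_ind (gT : finGroupType) (G : {group gT}) (x y : gT) :
  abelian G -> x \in G -> y \in G -> (G / <[x]>) \isog (G / <[y]>) ->
  forall k m, (x ^+ k \in pw m G) = (y ^+ k \in pw m G).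
Proof.
move=> cGG Gx Gy iso k m.
have nG z : z \in G -> G \subset 'N(<[z]>).
  by move=> Gz; apply: sub_abelian_norm; rewrite ?cycle_subG.
pose S := Group (pw_group_set m cGG).
have cardq z : z \in G -> (#|pw m (G / <[z]>)| * #|S :&: <[z]>| = #|S|)%N.
  move=> Gz; rewrite pw_quotient ?nG // -/(pw m G) -[pw m G]/(gval S).
  rewrite card_quotient; last by apply: subset_trans (nG z Gz); apply: pw_sub.
  by rewrite -indexgI mulnC Lagrange ?subsetIl.
have ordxy : #[x] = #[y].
  have := card_isog iso; rewrite !card_quotient ?nG // => eqi.
  have sx : <[x]> \subset G by rewrite cycle_subG.
  have sy : <[y]> \subset G by rewrite cycle_subG.
  have Lx := Lagrange sx; have Ly := Lagrange sy; rewrite eqi in Lx.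
  apply/eqP; rewrite !orderE -(eqn_pmul2r (indexg_gt0 G <[y]>)) Lx Ly //.
have eqI : #|S :&: <[x]>| = #|S :&: <[y]>|.
  have := cardq x Gx; rewrite (card_pw_isog m iso) -(cardq y Gy) => /eqP.
  rewrite eqn_pmul2l => [/eqP //|]; apply/card_gt0P; exists 1.
  by apply/imsetP; exists 1; rewrite ?expg1n.
have key z : z \in G -> (z ^+ k \in pw m G) = (#[z] %/ gcdn #[z] k %| #|S :&: <[z]>|).
  move=> Gz; rewrite -orderXgcd orderE.
  rewrite (cardSg_cyclic (cycle_cyclic z)) ?subsetIr ?cycle_subG ?mem_cycle //.
  by rewrite inE mem_cycle andbT.
by rewrite key // key // ordxy eqI.
Qed.


Definition lnO p n (gT : finGroupType) (A : {set gT}) :=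
  logn p #|'Ohm_n.+1(A) : 'Ohm_n(A)|.
Definition lni i p (gT : finGroupType) (A : {set gT}) :=
  \max_(e < logn p #|A| | i < lnO p e A) e.+1.

Lemma nth_abty (gT : finGroupType) (G : {group gT}) i :
    abelian G -> i < size (abelian_type G) ->
  nth 1%N (abelian_type G) i = (\prod_(p < #|G|.+1) p ^ lni i p G)%N.
Proof.
move=> cGG.
have (p): path leq 0 (map (logn p) (rev (abelian_type G))).
  move: (abelian_type_gt1 G) (abelian_type_dvdn_sorted G).
  case: abelian_type => //= m t; rewrite rev_cons map_rcons.
  elim: t m => //= n t IHt m /andP[/ltnW m_gt0 nt_gt1].
  rewrite -cats1 cat_path rev_cons map_rcons last_rcons /=.
  by case/andP=> /dvdn_leq_log-> // /IHt->.
have{cGG} [b defG <- b_sorted] := abelian_structure cGG.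
rewrite size_map => ltib; rewrite (nth_map 1 _ _ ltib); set x := nth 1 b i.
have Gx: x \in G.
  have: x \in b by rewrite mem_nth.
  rewrite -(bigdprodWY defG); case/splitPr=> bl br.
  by rewrite mem_gen // big_cat big_cons !inE cycle_id orbT.
have lexG: #[x] <= #|G| by rewrite dvdn_leq ?order_dvdG.
rewrite -[#[x]]partn_pi // (widen_partn _ lexG) big_mkord big_mkcond.
apply: eq_bigr => p _; transitivity (p ^ logn p #[x])%N.
  by rewrite -logn_gt0; case: posnP => // ->.
suffices lti_lnO e: (i < lnO p e G) = (e < logn p #[x]).
  congr (p ^ _)%N; apply/eqP; rewrite eqn_leq andbC; apply/andP; split.
    by apply/bigmax_leqP=> e; rewrite lti_lnO.
  have [-> //|logx_gt0] := posnP (logn p #[x]).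
  have lexpG: (logn p #[x]).-1 < logn p #|G|.
    by rewrite prednK // dvdn_leq_log ?order_dvdG.
  by rewrite (bigmax_sup (Ordinal lexpG)) ?(prednK, lti_lnO).
rewrite /lnO -(count_logn_dprod_cycle _ _ defG).
case: (ltnP e) (b_sorted p) => [lt_e_x | le_x_e].
  rewrite -(cat_take_drop i.+1 b) -map_rev rev_cat !map_cat cat_path.
  case/andP=> _ ordb; rewrite count_cat ((count _ _ =P i.+1) _) ?leq_addr //.
  rewrite -{2}(size_takel ltib) -all_count.
  move: ordb; rewrite (take_nth 1 ltib) -/x rev_rcons all_rcons /= lt_e_x.
  case/andP=> _ /=; move/(order_path_min leq_trans); apply: contraLR.
  rewrite -!has_predC !has_map; case/hasP=> y b_y /= le_y_e; apply/hasP.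
  by exists y; rewrite ?mem_rev //=; apply: contra le_y_e; apply: leq_trans.
rewrite -(cat_take_drop i b) -map_rev rev_cat !map_cat cat_path.
case/andP=> ordb _; rewrite count_cat -{1}(size_takel (ltnW ltib)) ltnNge.
rewrite addnC ((count _ _ =P 0) _) ?count_size //.
rewrite eqn0Ngt -has_count; apply/hasPn=> y b_y /=; rewrite -leqNgt.
apply: leq_trans le_x_e; have ->: x = last x (rev (drop i b)).
  by rewrite (drop_nth 1 ltib) rev_cons last_rcons.
rewrite -mem_rev in b_y; case/splitPr: (rev _) / b_y ordb => b1 b2.
rewrite !map_cat cat_path last_cat /=; case/and3P=> _ _.
move/(order_path_min leq_trans); case/lastP: b2 => // b3 x'.
by move/allP; apply; rewrite ?map_f ?last_rcons ?mem_rcons ?mem_head.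
Qed.

Lemma Ohm_card_isog (gT : finGroupType) (G H : {group gT}) :
  abelian G -> abelian H -> #|G| = #|H| ->
  (forall n, #|'Ohm_n(G)| = #|'Ohm_n(H)|) -> G \isog H.
Proof.
move=> cGG cHH eGH eO; rewrite eq_abelian_type_isog //.
have eqlnO p e : lnO p e G = lnO p e H.
  by rewrite /lnO -!divgS ?(Ohm_leq _ (leqnSn _)) //= !eO.
have eq_sz : size (abelian_type G) = size (abelian_type H).
  rewrite !size_abelian_type // /rank eGH; apply: eq_bigr => p _.
  by rewrite !p_rank_abelian // eO.
apply/eqP; apply: (@eq_from_nth _ 1%N) => // i ltiG.
rewrite !nth_abty -?eq_sz // eGH; apply: eq_bigr => p _; congr (p ^ _)%N.
rewrite /lni eGH; apply: eq_bigl => e; by rewrite eqlnO.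
Qed.

Lemma cancel_dprod (gT : finGroupType) (G G' A A' C C' : {group gT}) :
  abelian G -> A \x C = G -> A' \x C' = G' -> G \isog G' -> A \isog A' ->
  C \isog C'.
Proof.
move=> cGG dG dG' iG iA.
have cG'G' : abelian G' by rewrite -(isog_abelian iG).
have sCG : C \subset G by case/dprodP: dG => _ <- _ _; apply: mulG_subr.
have sC'G' : C' \subset G' by case/dprodP: dG' => _ <- _ _; apply: mulG_subr.
apply: Ohm_card_isog; rewrite ?(abelianS sCG) ?(abelianS sC'G') //.
  have := card_isog iG; rewrite -(dprod_card dG) -(dprod_card dG') (card_isog iA).
  by move/eqP; rewrite eqn_pmul2l ?cardG_gt0 // => /eqP.
move=> n; have := card_isog (isog_Ohm n iG).
rewrite -(dprod_card (Ohm_dprod n dG)) -(dprod_card (Ohm_dprod n dG')).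
rewrite (card_isog (isog_Ohm n iA)).
by move/eqP; rewrite eqn_pmul2l ?cardG_gt0 // => /eqP.
Qed.


Lemma pure_split (gT : finGroupType) (p : nat) (G : {group gT}) u j :
  p.-group G -> abelian G -> u \in G -> u ^+ (p ^ j) = 1 ->
  (forall l, l < j -> u ^+ (p ^ l) \notin 'Mho^l.+1(G)) ->
  exists C : {group gT}, <[u]> \x C = G.
Proof.
move=> pG cGG Gu uj pure.
case: j uj pure => [|j] uj pure.
  exists G; rewrite expn0 expg1 in uj; rewrite uj cycle1.
  by rewrite dprod1g.
have w_notM : u ^+ (p ^ j) \notin 'Mho^j.+1(G) by apply: pure.
have ntw : u ^+ (p ^ j) != 1.
  by apply: contra w_notM => /eqP->; rewrite group1.
have ntG : G :!=: 1.
  apply: contra ntw => /eqP G1; have := groupX (p ^ j) Gu.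
  by rewrite G1 => /set1P ->.
have [pr_p _ _] := pgroup_pdiv pG ntG.
have pu : p.-elt u by apply: mem_p_elt pG Gu.
have [m le_m ou0] : exists2 m, m <= j.+1 & #[u] = (p ^ m)%N.
  by apply/(@dvdn_pfactor p _ _ pr_p); rewrite order_dvdn uj.
have ou : #[u] = (p ^ j.+1)%N.
  rewrite ou0; congr (_ ^ _)%N; apply/eqP; rewrite eqn_leq le_m /= ltnNge.
  by apply: contra ntw => le_mj; rewrite -order_dvdn ou0 dvdn_exp2l.
have nsMG : 'Mho^j.+1(G) <| G by apply: Mho_normal.
set M := 'Mho^j.+1(G) in w_notM nsMG *.
have nMG : G \subset 'N(M) by case/andP: nsMG.
have tiM : <[u]> :&: M = 1.
  apply/trivgP/subsetP=> v /setIP[uv Mv]; apply/set1P; apply: contraNeq w_notM => ntv.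
  have pv : p.-elt v by apply: mem_p_elt pG (subsetP (Mho_sub _ _) _ Mv).
  have : <[u ^+ (p ^ j)]> \subset <[v]>.
    rewrite -(cardSg_cyclic (cycle_cyclic u)); last by rewrite cycle_subG.
      rewrite -!orderE orderXdiv ?ou ?dvdn_exp2l // expnS mulnK ?expn_gt0 ?prime_gt0 //.
      have ntv' : <[v]> != 1 by rewrite cycle_eq1.
      by have [_ ? _] := pgroup_pdiv pv ntv'.
    by rewrite cycle_subG mem_cycle.
  move/subsetP/(_ _ (cycle_id _)) => wv; apply: (subsetP _ _ wv).
  by rewrite cycle_subG.
have nMu : <[u]> \subset 'N(M) by apply: subset_trans nMG; rewrite cycle_subG.
have oub : #[coset M u] = #[u].
  have tiM' : M :&: <[u]> = 1 by rewrite setIC.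
  have := card_isog (quotient_isog nMu tiM').
  by rewrite /= quotient_cycle ?(subsetP nMG) // !orderE => ->.
have expGb : exponent (G / M) = #[coset M u].
  apply/eqP; rewrite eqn_dvd dvdn_exponent ?mem_quotient // andbT oub ou.
  apply/exponentP=> _ /morphimP[g Ng Gg ->]; rewrite -morphX //= coset_id //.
  by apply: Mho_p_elt => //; apply: mem_p_elt pG Gg.
have [Cb] := splitsP (abelian_splits (mem_quotient M Gu) (esym expGb) (quotient_abelian M cGG)).
case/complP=> tiCb defGb.
pose C := (coset M @*^-1 Cb)%G.
have sCbG : Cb \subset G / M by rewrite -defGb mulG_subr.
have sCG : C \subset G by rewrite -(quotientGK nsMG) morphpreS.
have tiC : <[u]> :&: C = 1.
  apply/trivgP/subsetP=> v /setIP[uv /morphpreP[Nv Cbv]].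
  have : coset M v \in <[coset M u]> :&: Cb.
    by rewrite inE Cbv andbT -quotient_cycle ?(subsetP nMG) // mem_quotient.
  rewrite tiCb => /set1P /(coset_idr Nv) Mv.
  by rewrite -tiM inE uv Mv.
exists C; rewrite dprodE //; last by apply: sub_abelian_cent2 cGG _ _; rewrite ?cycle_subG.
apply/eqP; rewrite eqEcard mul_subG ?cycle_subG //= TI_cardMg //.
rewrite card_morphpre ?ker_coset; last by apply: subset_trans sCbG _; apply: quotientS.
have := Lagrange (normal_sub nsMG); rewrite -card_quotient // -defGb TI_cardMg //.
by rewrite -!orderE oub mulnCA => ->.
Qed.


Lemma mem_injm_im (aT rT : finGroupType) (D : {group aT}) (f : {morphism D >-> rT}) (A : {group aT}) x :
  'injm f -> A \subset D -> x \in D -> (f x \in f @* A) = (x \in A).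
Proof.
move=> injf sAD Dx; apply/idP/idP=> [fAx | Ax]; last exact: mem_morphim.
by rewrite -(injmK injf sAD); apply: mem_morphpre.
Qed.

Lemma dprod_mem (gT : finGroupType) (A B G A' B' G' : {group gT}) a b :
  A \x B = G -> A' \x B' = G' -> A' \subset A -> B' \subset B ->
  a \in A -> b \in B -> (a * b \in G') = (a \in A') && (b \in B').
Proof.
move=> dG dG' sA sB Aa Bb; apply/idP/andP=> [abG' | [Aa' Bb']]; last first.
  by case/dprodP: dG' => _ <- _ _; apply: mem_mulg.
have [a' [b' [A'a B'b eab _]]] := mem_dprod dG' abG'.
have Gab : a * b \in G by case/dprodP: dG => _ <- _ _; apply: mem_mulg.
have [y [z [_ _ _ uniq]]] := mem_dprod dG Gab.
have [-> ->] := uniq a b Aa Bb (erefl _).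
have [<- <-] := uniq a' b' (subsetP sA _ A'a) (subsetP sB _ B'b) eab.
by [].
Qed.

Lemma Mho_memr (gT : finGroupType) n (A C G : {group gT}) c :
  A \x C = G -> c \in C -> (c \in 'Mho^n(G)) = (c \in 'Mho^n(C)).
Proof.
move=> dG Cc.
have := dprod_mem dG (Mho_dprod n dG) (Mho_sub n A) (Mho_sub n C) (group1 A) Cc.
by rewrite mul1g group1.
Qed.

Lemma Mho_memlr (gT : finGroupType) n (A C G : {group gT}) a c :
  A \x C = G -> a \in A -> c \in C ->
  (a * c \in 'Mho^n(G)) = (a \in 'Mho^n(A)) && (c \in 'Mho^n(C)).
Proof.
move=> dG Aa Cc.
exact: (dprod_mem dG (Mho_dprod n dG) (Mho_sub n A) (Mho_sub n C) Aa Cc).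
Qed.

Section PG.
Variables (gT : finGroupType) (p : nat) (G : {group gT}).
Hypotheses (pG : p.-group G) (cGG : abelian G).

Lemma mho_root i a : a \in 'Mho^i(G) -> exists2 g, g \in G & a = g ^+ (p ^ i).
Proof. by rewrite (MhoEabelian i pG cGG) => /imsetP[g Gg ->]; exists g. Qed.

Lemma mho_in i g : g \in G -> g ^+ (p ^ i) \in 'Mho^i(G).
Proof. by move=> Gg; apply: Mho_p_elt => //; apply: mem_p_elt pG Gg. Qed.

Lemma mho_pow i l a : a \in 'Mho^i(G) -> a ^+ (p ^ l) \in 'Mho^(i + l)(G).
Proof.
by case/mho_root=> g Gg ->; rewrite -expgM -expnD mho_in.
Qed.

Lemma mho_top g : g \in 'Mho^(logn p #|G|)(G) -> g = 1.
Proof.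
by case/mho_root=> h Gh ->; rewrite -(card_pgroup pG) expg_cardG.
Qed.

Lemma mho_mono i k g : i <= k -> g \in 'Mho^k(G) -> g \in 'Mho^i(G).
Proof. by move=> le; apply: (subsetP (Mho_leq G le)). Qed.

End PG.

Lemma mho_injm (gT : finGroupType) (G : {group gT}) (f : {morphism G >-> gT}) n a :
  'injm f -> a \in G -> (f a \in 'Mho^n(f @* G)) = (a \in 'Mho^n(G)).
Proof.
move=> injf Ga; rewrite -morphim_Mho //; apply: mem_injm_im => //; exact: Mho_sub.
Qed.

Lemma step (P : pred nat) a d : P a -> ~~ P (a + d) ->
  exists i, [/\ a <= i, P i & ~~ P i.+1].
Proof.
elim: d a => [|d IH] a Pa; first by rewrite addn0 Pa.
case Pa1: (P a.+1) => nP; last by exists a; rewrite Pa1 leqnn.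
have nP' : ~~ P (a.+1 + d) by rewrite addSnnS.
have [i [le Pi nPi]] := IH a.+1 Pa1 nP'.
by exists i; split=> //; apply: ltnW.
Qed.

Lemma order_exact (gT : finGroupType) p (u : gT) j :
  prime p -> u ^+ (p ^ j.+1) = 1 -> u ^+ (p ^ j) != 1 -> #[u] = (p ^ j.+1)%N.
Proof.
move=> pr_p uj ntw.
have [m le_m ou0] : exists2 m, m <= j.+1 & #[u] = (p ^ m)%N.
  by apply/(@dvdn_pfactor p _ _ pr_p); rewrite order_dvdn uj.
rewrite ou0; congr (_ ^ _)%N; apply/eqP; rewrite eqn_leq le_m /= ltnNge.
by apply: contra ntw => le_mj; rewrite -order_dvdn ou0 dvdn_exp2l.
Qed.


Lemma root_rule (gT : finGroupType) (p : nat) (G : {group gT}) x H :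
  p.-group G -> abelian G -> x \in 'Mho^H.+1(G) -> x \notin 'Mho^H.+2(G) ->
  exists2 z, z \in G & z ^+ p = x /\
    forall l i, (z ^+ (p ^ l) \in 'Mho^i(G)) =
                if l is l'.+1 then x ^+ (p ^ l') \in 'Mho^i(G) else i <= H.
Proof.
move=> pG cGG xM xnM; have [w Gw xw] := mho_root pG cGG xM.
exists (w ^+ (p ^ H)); first by rewrite groupX.
have zp : (w ^+ (p ^ H)) ^+ p = x by rewrite -expgM -expnSr.
split=> // -[|l] i; last by rewrite expnS expgM zp.
rewrite expn0 expg1; apply/idP/idP=> [zM | leiH]; last first.
  by apply: mho_mono leiH _; apply: mho_in.
rewrite leqNgt; apply: contra xnM => ltHi.
have := mho_pow pG cGG 1 (mho_mono ltHi zM); rewrite expn1 zp.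
by rewrite addn1.
Qed.


Lemma split_step (gT : finGroupType) (p : nat) (G : {group gT}) x j :
  p.-group G -> abelian G -> x \in G -> 0 < j ->
  x ^+ (p ^ j) \in 'Mho^j.+1(G) ->
  (forall l, l < j -> x ^+ (p ^ l) \notin 'Mho^l.+1(G)) ->
  exists x1, exists c, exists C : {group gT},
   [/\ <[x1]> \x C = G, x = x1 * c, c \in C, #[x1] = (p ^ j)%N &
    forall l i, (c ^+ (p ^ l) \in 'Mho^i(C)) =
      if l < j then x ^+ (p ^ j) \in 'Mho^(i + (j - l))(G)
      else x ^+ (p ^ l) \in 'Mho^i(G)].
Proof.
move=> pG cGG Gx j_gt0 Qj minj.
have comm a b : a \in G -> b \in G -> commute a b by move=> Ga Gb; apply: (centsP cGG).
have x_nM1 : x \notin 'Mho^1(G) by have := minj 0 j_gt0; rewrite expn0 expg1.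
have ntx : x != 1 by apply: contra x_nM1 => /eqP ->; rewrite group1.
have ntG : G :!=: 1.
  by apply: contra ntx => /eqP G1; move: Gx; rewrite G1 => /set1P ->.
have [pr_p _ _] := pgroup_pdiv pG ntG.
set N := logn p #|G|.
have [c0 [Gc0 c0j c0M]] : exists c0, [/\ c0 \in G, c0 ^+ (p ^ j) = x ^+ (p ^ j) &
    forall t, x ^+ (p ^ j) \in 'Mho^(j + t)(G) -> c0 \in 'Mho^t(G)].
  have [xj1 | ntxj] := eqVneq (x ^+ (p ^ j)) 1.
    by exists 1; split; rewrite ?group1 ?expg1n.
  pose P t := x ^+ (p ^ j) \in 'Mho^(j + t)(G).
  have P1 : P 1%N by rewrite /P addn1.
  have nPN : ~~ P (1 + N)%N.
    apply: contra ntxj; rewrite /P => M; apply/eqP; apply: (mho_top pG cGG).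
    by apply: (mho_mono _ M); rewrite addnA leq_addl.
  have [H [leH PH nPH]] := step P1 nPN.
  have [v Gv xjv] := mho_root pG cGG PH.
  exists (v ^+ (p ^ H)); split; first by rewrite groupX.
    by rewrite -expgM -expnD addnC xjv.
  move=> t Pt; have leTH : t <= H.
    rewrite leqNgt; apply: contra nPH => ltHt; apply: (mho_mono _ Pt).
    by rewrite leq_add2l.
  by apply: mho_mono leTH _; apply: mho_in pG _ _ Gv.
have c0M1 : c0 \in 'Mho^1(G) by apply: c0M; rewrite addn1.
pose u := x * c0^-1.
have Gu : u \in G by rewrite groupM ?groupV.
have xu : x = u * c0 by rewrite mulgKV.
have uj : u ^+ (p ^ j) = 1.
  apply: (@mulIg _ (c0 ^+ (p ^ j))); rewrite mul1g -expgMn; last exact: comm.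
  by rewrite -xu c0j.
have upure : forall l, l < j -> u ^+ (p ^ l) \notin 'Mho^l.+1(G).
  move=> l ltlj; apply: contra (minj l ltlj) => uM.
  rewrite xu expgMn; last exact: comm.
  rewrite groupM //.
  by have := mho_pow pG cGG l c0M1; rewrite add1n.
have [C dG] := pure_split pG cGG Gu uj upure.
have pu : p.-elt u by apply: mem_p_elt pG Gu.
have ou : #[u] = (p ^ j)%N.
  case: j j_gt0 {Qj minj c0j c0M uj upure} (uj) (upure) => // j _ uj upure.
  apply: order_exact pr_p uj _; have := upure j (ltnSn j).
  by apply: contra => /eqP ->; rewrite group1.
have [a [c [ua Cc c0ac _]]] := mem_dprod dG Gc0.
have sCG : C \subset G by case/dprodP: dG => _ <- _ _; apply: mulG_subr.
have pC : p.-group C by apply: pgroupS sCG pG.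
have cCC : abelian C by apply: abelianS sCG cGG.
have Gc : c \in G by apply: (subsetP sCG).
have cM t : x ^+ (p ^ j) \in 'Mho^(j + t)(G) -> c \in 'Mho^t(C).
  move/c0M; rewrite c0ac (Mho_memlr _ dG ua Cc).
  by case/andP.
have aM : a \in 'Mho^1(<[u]>).
  by move: c0M1; rewrite c0ac (Mho_memlr _ dG ua Cc) => /andP[].
pose x1 := u * a.
have ox1 : #[x1] = #[u].
  rewrite /x1; move: aM; rewrite (Mho_p_cycle 1 pu) expn1 => /cycleP[s ->].
  rewrite -expgM -expgS orderXgcd ou.
  have cop : coprime (p ^ j) (p * s).+1.
    rewrite coprime_pexpl // prime_coprime // -addn1 dvdn_addr ?dvdn_mulr //.
    by rewrite dvdn1 neq_ltn (prime_gt1 pr_p) orbT.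
  by rewrite (eqP cop) divn1.
have Gx1 : x1 \in G by rewrite groupM // (subsetP _ _ ua) // cycle_subG.
have cyc : <[x1]> = <[u]>.
  apply/eqP; rewrite eqEcard cycle_subG groupM ?cycle_id //= -!orderE ox1 leqnn.
  by [].
have x1pow l : j <= l -> x1 ^+ (p ^ l) = 1.
  by move=> le; apply/eqP; rewrite -order_dvdn ox1 ou dvdn_exp2l.
have xc l : j <= l -> x ^+ (p ^ l) = c ^+ (p ^ l).
  move=> le; rewrite xu c0ac mulgA expgMn; last exact: comm.
  by rewrite x1pow // mul1g.
have memC i g : g \in C -> (g \in 'Mho^i(G)) = (g \in 'Mho^i(C)).
  by move=> Cg; apply: Mho_memr dG Cg.
exists x1, c, C; split=> //.
- by rewrite cyc.
- by rewrite xu c0ac mulgA.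
- by rewrite ox1 ou.
move=> l i; case: (ltnP l j) => [ltlj | lejl]; last by rewrite xc // memC // groupX.
apply/idP/idP=> [cM' | xM].
  have := mho_pow pC cCC (j - l) cM'; rewrite -expgM -expnD subnKC ?(ltnW ltlj) //.
  by rewrite -memC ?xc // groupX.
case: (leqP i l) => [leil | ltli].
  by apply: mho_mono leil _; apply: mho_in pC _ _ Cc.
have e : i + (j - l) = j + (i - l).
  by rewrite !addnBA ?(ltnW ltlj) ?(ltnW ltli) // addnC.
rewrite e in xM; have := mho_pow pC cCC l (cM _ xM).
by rewrite subnK ?(ltnW ltli).
Qed.

Lemma meas1 a b c n : (2 * c - a < n.+1 -> a < b -> b <= c -> 2 * c - b < n)%N.
Proof. lia. Qed.

Lemma meas2 a g cC oc n :
  (2 * g - a < n.+1 -> a <= g -> 2 * cC <= g -> 0 < oc -> 0 < g -> 2 * cC - oc < n)%N.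
Proof. lia. Qed.

Lemma pthm (gT : finGroupType) (p : nat) n (G G' : {group gT}) x y :
  (2 * #|G| - #[x] < n)%N -> p.-group G -> abelian G -> G \isog G' ->
  x \in G -> y \in G' ->
  (forall l i, (x ^+ (p ^ l) \in 'Mho^i(G)) = (y ^+ (p ^ l) \in 'Mho^i(G'))) ->
  exists f : {morphism G >-> gT}, [/\ 'injm f, f @* G = G' & f x = y].
Proof.
elim: n G G' x y => // n IH G G' x y lt_n pG cGG iso Gx Gy ind.
have pG' : p.-group G' by rewrite -(isog_pgroup p iso).
have cG'G' : abelian G' by rewrite -(isog_abelian iso).
have eqc : #|G'| = #|G| by rewrite (card_isog iso).
have ind0 i : (x \in 'Mho^i(G)) = (y \in 'Mho^i(G')).
  by have := ind 0 i; rewrite expn0 !expg1.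
have [x1 | ntx] := eqVneq x 1.
  have y1 : y = 1.
    by apply: (mho_top pG' cG'G'); rewrite eqc -ind0 x1 group1.
  case/isogP: iso => f injf imf; exists f; split => //.
  by rewrite x1 y1 morph1.
have ntG : G :!=: 1.
  by apply: contra ntx => /eqP G1; move: Gx; rewrite G1 => /set1P ->.
have [pr_p _ _] := pgroup_pdiv pG ntG.
have ordx : #[x] <= #|G| by rewrite dvdn_leq ?order_dvdG.
case xM1 : (x \in 'Mho^1(G)).
  have nxN : x \notin 'Mho^(1 + logn p #|G|)(G).
    apply: contra ntx => M; apply/eqP; apply: (mho_top pG cGG).
    by apply: (mho_mono _ M); apply: leq_addl.
  have [H' [leH PH nPH]] :=
    @step (fun i => x \in 'Mho^i(G)) 1 (logn p #|G|) xM1 nxN.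
  case: H' leH PH nPH => // H _ PH nPH.
  have [z Gz [zx zrule]] := root_rule pG cGG PH nPH.
  have PH' : y \in 'Mho^H.+1(G') by rewrite -ind0.
  have nPH' : y \notin 'Mho^H.+2(G') by rewrite -ind0.
  have [z' Gz' [zy zrule']] := root_rule pG' cG'G' PH' nPH'.
  have ntz : <[z]> != 1.
    by rewrite cycle_eq1; apply: contra ntx => /eqP z1; rewrite -zx z1 expg1n.
  have pz : p.-group <[z]> by apply: mem_p_elt pG Gz.
  have [_ pdz _] := pgroup_pdiv pz ntz.
  have ordz : #[x] < #[z].
    rewrite -zx orderXdiv -?orderE // ltn_Pdiv ?prime_gt1 ?order_gt0 //.
  have ordz' : #[z] <= #|G| by rewrite dvdn_leq ?order_dvdG.
  have [|f [injf imf fz]] := IH G G' z z' (meas1 lt_n ordz ordz') pG cGG iso Gz Gz'.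
    by move=> l i; rewrite zrule zrule'; case: l => [|l] //; apply: ind.
  by exists f; split => //; rewrite -zx morphX // fz zy.
pose Q l := x ^+ (p ^ l) \in 'Mho^l.+1(G).
have exQ : exists l, Q l.
  exists (logn p #|G|); rewrite /Q -(card_pgroup pG) expg_cardG //.
case: (ex_minnP exQ) => j Qj minj.
have j_gt0 : 0 < j.
  by case: j Qj minj => // Q0; rewrite /Q expn0 expg1 xM1 in Q0.
have minj' l : l < j -> x ^+ (p ^ l) \notin 'Mho^l.+1(G).
  by move=> ltlj; apply: contraL ltlj => Ql; rewrite -leqNgt minj.
have Qj' : y ^+ (p ^ j) \in 'Mho^j.+1(G') by rewrite -ind.
have minjy l : l < j -> y ^+ (p ^ l) \notin 'Mho^l.+1(G').
  by move=> ltlj; rewrite -ind minj'.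
have [x1 [c [C [dG xe Cc ox1 crule]]]] := split_step pG cGG Gx j_gt0 Qj minj'.
have [y1 [c' [C' [dG' ye Cc' oy1 crule']]]] := split_step pG' cG'G' Gy j_gt0 Qj' minjy.
have isoC : C \isog C'.
  apply: cancel_dprod cGG dG dG' iso _.
  by rewrite isog_cyclic_card ?cycle_cyclic // -!orderE ox1 oy1 eqxx.
have sCG : C \subset G by case/dprodP: dG => _ <- _ _; apply: mulG_subr.
have pC : p.-group C by apply: pgroupS sCG pG.
have cCC : abelian C by apply: abelianS sCG cGG.
have le2C : (2 * #|C| <= #|G|)%N.
  rewrite -(dprod_card dG) -orderE ox1 leq_mul2r; apply/orP; right.
  by rewrite -(expn0 p) ltn_exp2l ?prime_gt1.
have [|g [injg img gc]] :=
  IH C C' c c' (meas2 lt_n ordx le2C (order_gt0 c) (cardG_gt0 G)) pC cCC isoC Cc Cc'.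
  by move=> l i; rewrite crule crule'; case: ifP => _; apply: ind.
have dvd : #[y1] %| #[x1] by rewrite ox1 oy1.
have inje : 'injm (eltm dvd) by rewrite injm_eltm ox1 oy1.
have cf : g @* C \subset 'C(eltm dvd @* <[x1]>).
  by rewrite img im_eltm; case/dprodP: dG'.
exists (dprodm_morphism dG cf); split.
- rewrite injm_dprodm inje injg img im_eltm /=.
  by case/dprodP: dG' => _ _ _ ->.
- by rewrite im_dprodm img im_eltm; case/dprodP: dG'.
have Gx1 : x1 \in G by rewrite (subsetP _ _ (cycle_id x1)) //; case/dprodP: dG => _ <- _ _; apply: mulG_subl.
rewrite xe morphM //= ?(subsetP sCG) //.
by rewrite dprodmEl ?cycle_id // dprodmEr //= eltm_id gc ye.
Qed.

Lemma pw1 (gT : finGroupType) m (A : {group gT}) : 1 \in pw m A.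
Proof. by apply/imsetP; exists 1; rewrite ?expg1n. Qed.

Lemma pw_dprod (gT : finGroupType) m (A B G : {group gT}) a b :
  A \x B = G -> abelian G -> a \in A -> b \in B ->
  (a * b \in pw m G) = (a \in pw m A) && (b \in pw m B).
Proof.
move=> dG cGG Aa Bb.
have [_ defG _ _] := dprodP dG.
have sAG : A \subset G by rewrite -defG mulG_subl.
have sBG : B \subset G by rewrite -defG mulG_subr.
apply/idP/andP=> [/imsetP[g Gg eab] | [/imsetP[a0 Aa0 ->] /imsetP[b0 Bb0 ->]]].
  have [g1 [g2 [Ag1 Bg2 eg _]]] := mem_dprod dG Gg.
  have Gab : a * b \in G by rewrite -defG mem_mulg.
  have cg : commute g1 g2.
    by apply: (centsP cGG); [exact: (subsetP sAG) | exact: (subsetP sBG)].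
  have e2 : a * b = g1 ^+ m * g2 ^+ m by rewrite eab eg expgMn.
  have [y [z [_ _ _ uniq]]] := mem_dprod dG Gab.
  have [ay bz] := uniq a b Aa Bb (erefl _).
  have [gy gz] := uniq (g1 ^+ m) (g2 ^+ m) (groupX _ Ag1) (groupX _ Bg2) e2.
  rewrite ay bz -gy -gz.
  by split; [apply/imsetP; exists g1 | apply/imsetP; exists g2].
apply/imsetP; exists (a0 * b0); first by rewrite -defG mem_mulg.
rewrite expgMn //; apply: (centsP cGG); [exact: (subsetP sAG) | exact: (subsetP sBG)].
Qed.

Lemma coprime_mem (gT : finGroupType) (P S : {group gT}) s k :
  s \in P -> coprime #|P| k -> (s ^+ k \in S) = (s \in S).
Proof.
move=> Ps cop; apply/idP/idP=> [Sk | Ss]; last exact: groupX.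
by rewrite -(expgK cop Ps) groupX.
Qed.

Lemma gthm (gT : finGroupType) n (G : {group gT}) x y :
  #|G| < n -> abelian G -> x \in G -> y \in G ->
  (forall k m, (x ^+ k \in pw m G) = (y ^+ k \in pw m G)) ->
  exists f : {morphism G >-> gT}, [/\ 'injm f, f @* G = G & f x = y].
Proof.
elim: n G x y => // n IH G x y ltG cGG Gx Gy ind.
have [G1 | ntG] := eqVneq G 1%G.
  have x1 : x = 1 by move: Gx; rewrite G1 => /set1P.
  have y1 : y = 1 by move: Gy; rewrite G1 => /set1P.
  exists (idm_morphism G); split; rewrite ?injm_idm ?im_idm //=.
  by rewrite x1 y1.
have nilG := abelian_nil cGG.
set p := pdiv #|G|.
have gt1G : 1 < #|G| by rewrite cardG_gt1.
have pr_p : prime p by apply: pdiv_prime.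
have dG : 'O_p(G) \x 'O_p^'(G) = G := nilpotent_pcoreC p nilG.
set P := 'O_p(G) in dG *; set K := 'O_p^'(G) in dG *.
have hP : p.-Hall(G) P := nilpotent_pcore_Hall p nilG.
have hK : p^'.-Hall(G) K := nilpotent_pcore_Hall p^' nilG.
have pP : p.-group P := pcore_pgroup p G.
have pK : p^'.-group K := pcore_pgroup p^' G.
have sPG : P \subset G := pcore_sub p G.
have sKG : K \subset G := pcore_sub p^' G.
have cPP : abelian P := abelianS sPG cGG.
have cKK : abelian K := abelianS sKG cGG.
have copPK : coprime #|P| #|K| := pnat_coprime pP pK.
have copKP : coprime #|K| #|P| by rewrite coprime_sym.
have memP z : z \in G -> z.`_p \in P.
  by move=> Gz; rewrite (mem_Hall_pcore hP) ?p_elt_constt // groupX.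
have memK z : z \in G -> z.`_p^' \in K.
  by move=> Gz; rewrite (mem_Hall_pcore hK) ?p_elt_constt // groupX.
have ntP : P :!=: 1.
  rewrite -cardG_gt1 (card_Hall hP) p_part_gt1 pi_pdiv //.
have ltK : #|K| < n.
  rewrite -ltnS (leq_trans _ ltG) // -(dprod_card dG) ltnS -{1}[#|K|]mul1n.
  by rewrite ltn_pmul2r ?cardG_gt0 // cardG_gt1.
have xsplit z : z \in G -> z = z.`_p * z.`_p^' by move=> _; rewrite consttC.
have commz z : z \in G -> commute z.`_p z.`_p^'.
  by move=> Gz; apply: (centsP cGG); apply: groupX.
have indP z l i : z \in G ->
    (z.`_p ^+ (p ^ l) \in 'Mho^i(P)) = (z ^+ (p ^ l * #|K|) \in pw (p ^ i) G).
  move=> Gz; rewrite {2}(xsplit z Gz) (expgMn _ (commz z Gz)).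
  have e1 : z.`_p^' ^+ (p ^ l * #|K|) = 1.
    by rewrite mulnC expgM (expg_cardG (memK z Gz)) expg1n.
  have PzK : (z.`_p ^+ (p ^ l)) \in P by rewrite groupX ?memP.
  rewrite (pw_dprod _ dG cGG (groupX _ (memP z Gz)) (groupX _ (memK z Gz))).
  rewrite e1 pw1 andbT expgM.
  rewrite (MhoEabelian i pP cPP) -/(pw (p ^ i) P).
  pose S := Group (pw_group_set (p ^ i) cPP).
  by rewrite -[pw _ P]/(gval S) (@coprime_mem _ _ S _ _ PzK copPK).
have indK (w : gT) (k0 m0 : nat) : w \in G ->
    (w.`_p^' ^+ k0 \in pw m0 K) = (w ^+ (k0 * #|P|) \in pw m0 G).
  move=> Gw; rewrite {2}(xsplit w Gw) (expgMn _ (commz w Gw)).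
  have e1 : w.`_p ^+ (k0 * #|P|) = 1.
    by rewrite mulnC expgM (expg_cardG (memP w Gw)) expg1n.
  rewrite (pw_dprod _ dG cGG (groupX _ (memP w Gw)) (groupX _ (memK w Gw))).
  rewrite e1 pw1 /= expgM.
  pose S := Group (pw_group_set m0 cKK).
  by rewrite -[pw _ K]/(gval S) (@coprime_mem _ _ S _ _ (groupX _ (memK w Gw)) copKP).
have [|fP [injP imP fPx]] := pthm (ltnSn _) pP cPP (isog_refl P) (memP x Gx) (memP y Gy).
  by move=> l i; rewrite !indP.
have [fK [injK imK fKx]] : exists f : {morphism K >-> gT},
    [/\ 'injm f, f @* K = K & f x.`_p^' = y.`_p^'].
  apply: IH => //; try exact: memK.
  by move=> k m; rewrite !indK.
have cf : fK @* K \subset 'C(fP @* P) by rewrite imK imP; case/dprodP: dG.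
exists (dprodm_morphism dG cf); split.
- rewrite injm_dprodm injP injK imP imK /=.
  by case/dprodP: dG => _ _ _ ->.
- by rewrite im_dprodm imP imK; case/dprodP: dG.
rewrite {1}(xsplit x Gx) morphM /= ?groupX //.
by rewrite dprodmEl ?memP // dprodmEr ?memK // fPx fKx -xsplit.
Qed.

Lemma easy_dir (gT : finGroupType) (G : {group gT}) (x y : gT) :
  abelian G -> x \in G -> y \in G ->
  (exists2 a : {perm gT}, a \in Aut G & a x = y) ->
  (G / <[x]>) \isog (G / <[y]>).
Proof.
move=> cGG Gx Gy [a AutGa axy].
have nsxG : <[x]> <| G by rewrite -sub_abelian_normal ?cycle_subG.
have := sub_isog (subxx (G / <[x]>)) (injm_quotm nsxG (injm_autm AutGa)).
by rewrite morphim_quotm im_autm morphim_cycle //= autmE axy.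
Qed.

End Aux.
Import Aux.

Theorem theorem2p1 (gT : finGroupType) (G : {group gT}) (x y : gT) :
  abelian G -> x \in G -> y \in G ->
  (exists2 a : {perm gT}, a \in Aut G & a x = y) <->
  (G / <[x]>) \isog (G / <[y]>).
Proof.
move=> cGG Gx Gy; split; first exact: easy_dir.
move=> iso; have ind := quot_ind cGG Gx Gy iso.
have [f [injf imf fx]] := gthm (ltnSn #|G|) cGG Gx Gy ind.
exists (aut injf imf); first exact: Aut_aut.
by rewrite autE.
Qed.
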